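(* Let $P,Q$ be nonzero coprime integers with $\Delta:=P^2-4Q\neq0$, such that $\alpha/\beta$ is not a root of unity, where $\alpha,\beta$ are the roots of $x^2-Px+Q$. Let $(U_n)$ be the Lucas sequence $U_n=(\alpha^n-\beta^n)/(\alpha-\beta)$. Let $n,k$ be positive integers with $n\ge k$. Then the number \[\left\{{n\atop k}\right\}_{\boldsymbol U}:=\frac{\mathrm{lcm}(U_n,U_{n-1},\dots,U_{n-k+1})}{\mathrm{lcm}(U_1,U_2,\dots,U_k)}\] is a positive integer, and it divides $\binom{n}{k}_{\boldsymbol U}$.
   Context: $U_0=0$, $U_1=1$, $U_{n+2}=PU_{n+1}-QU_n$. For $n\ge k\ge1$, $\binom{n}{k}_{\boldsymbol U}:=\frac{U_nU_{n-1}\cdots U_{n-k+1}}{U_1U_2\cdots U_k}$. *)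

(* Defs.v *)
From mathcomp Require Import all_boot all_order all_algebra all_field.
Set Implicit Arguments. Unset Strict Implicit. Unset Printing Implicit Defensive.
Import Order.TTheory GRing.Theory Num.Theory.
Local Open Scope ring_scope.

Fixpoint lucasU (P Q : int) (n : nat) : int :=
  match n with
  | 0%N => 0
  | m.+1 => match m with
            | 0%N => 1
            | l.+1 => P * lucasU P Q m - Q * lucasU P Q l
            end
  end.

Definition lcmU_top (P Q : int) (n k : nat) : nat :=
  \big[lcmn/1%N]_(i < k) `|lucasU P Q (n - i)|%N.

Definition lcmU_bot (P Q : int) (k : nat) : nat :=
  \big[lcmn/1%N]_(i < k) `|lucasU P Q i.+1|%N.

Definition lucas_binom (P Q : int) (n k : nat) : rat :=
  (\prod_(i < k) (lucasU P Q (n - i))%:~R) / (\prod_(i < k) (lucasU P Q i.+1)%:~R).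

Definition lucas_lcm_binom (P Q : int) (n k : nat) : rat :=
  (lcmU_top P Q n k)%:R / (lcmU_bot P Q k)%:R.

(* Main.v *)
Require Import Defs.
From mathcomp Require Import all_boot all_order all_algebra all_field.
From mathcomp Require Import ring zify.
Import Order.TTheory GRing.Theory Num.Theory.

Lemma sum_bool_card k (B : 'I_k -> bool) : \sum_(i < k) (B i : nat) = #|[set i | B i]|.
Proof.
rewrite -sum1_card [RHS]big_mkcond /=; apply: eq_bigr => i _; rewrite inE; by case: (B i).
Qed.

Lemma count_le (A : nat -> bool) k n : k <= n ->
  (forall d m, 0 < d -> d %| m -> 0 < m -> A d -> A m) ->
  (forall a b, 0 < a -> 0 < b -> A a -> A b -> A (gcdn a b)) ->
  \sum_(i < k) A i.+1 <= \sum_(i < k) A (n - i).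
Proof.
move=> kn C1 C2.
case: (boolP [exists i : 'I_k, A i.+1]) => [/existsP [i0 hi0] | /existsP hno]; last first.
  rewrite big1 // => i _; apply/eqP; rewrite eqb0; apply/negP => h; apply: hno; by exists i.
have exP : exists m, (0 < m) && A m by exists i0.+1.
case: (ex_minnP exP) => r /andP [r0 Ar] rmin.
have hdiv : forall j, 0 < j -> A j -> r %| j.
  move=> j j0 Aj; apply/gcdn_idPl.
  have g0 : 0 < gcdn r j by rewrite gcdn_gt0 r0.
  have Ag := C2 _ _ r0 j0 Ar Aj.
  have h1 : r <= gcdn r j by apply: rmin; rewrite g0 Ag.
  have h2 : gcdn r j <= r by apply: dvdn_leq => //; exact: dvdn_gcdl.
  lia.
case: k kn i0 hi0 => [|k] kn i0 hi0; first by case: i0 hi0.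
rewrite !sum_bool_card.
pose g (i : 'I_k.+1) : 'I_k.+1 := inord (n %% r + i.+1 - r).
have rle : forall i : 'I_k.+1, A i.+1 -> r <= i.+1.
  move=> i hi; apply: dvdn_leq => //; exact: hdiv.
have hmod := ltn_pmod n r0.
have gval : forall i : 'I_k.+1, A i.+1 -> (g i : nat) = n %% r + i.+1 - r.
  move=> i hi; rewrite /g inordK //; have := rle i hi; have := ltn_ord i; lia.
rewrite -(@card_in_imset _ _ g); last first.
  move=> i j; rewrite !inE => hi hj e.
  have := congr1 val e; rewrite /= !gval //; have := rle i hi; have := rle j hj; move=> *; apply: val_inj => /=; lia.
apply: subset_leq_card; apply/subsetP => _ /imsetP [i hi ->].
rewrite inE in hi; rewrite inE gval //.
have [q hq] := dvdnP (hdiv _ (ltn0Sn _) hi).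
have hdn := divn_eq n r.
set a := n %/ r in hdn; set b := n %% r in hdn hmod *.
have ik : i.+1 <= n by have := ltn_ord i; lia.
have qa : q <= a.
  have : q * r < a.+1 * r by rewrite -hq mulSn; lia.
  by rewrite ltn_pmul2r // ltnS.
have -> : n - (b + i.+1 - r) = (a.+1 - q) * r.
  rewrite mulnBl hq; have : q * r <= a.+1 * r by rewrite leq_pmul2r //; lia.
  have rX : r <= q * r by rewrite -hq; exact: rle.
  rewrite mulSn; lia.
apply: (C1 r) => //; first exact: dvdn_mull.
  rewrite muln_gt0 r0 andbT; lia.
Qed.

Lemma sum_lt x M : \sum_(t < M) (t < x) = minn x M.
Proof.
elim: M => [|M IH]; first by rewrite big_ord0 minn0.
rewrite big_ord_recr /= IH; case: (ltnP M x) => h /=; lia.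
Qed.

Lemma lt_max_sum k (F : 'I_k -> nat) t : (t < \max_(i < k) F i) <= \sum_(i < k) (t < F i).
Proof.
case: (boolP [exists i, t < F i]) => [/existsP [i hi] | /existsP hno].
  apply: leq_trans (leq_b1 _) _.
  by rewrite (bigD1 i) //= hi.
have : \max_(i < k) F i <= t.
  apply/bigmax_leqP => i _; rewrite leqNgt; apply/negP => h; apply: hno; by exists i.
by rewrite leqNgt => /negPf ->.
Qed.

Lemma max_le (f : nat -> nat) k n : k <= n ->
  (forall d m, 0 < d -> d %| m -> 0 < m -> f d <= f m) ->
  \max_(i < k) f i.+1 <= \max_(i < k) f (n - i).
Proof.
move=> kn H1; apply/bigmax_leqP => j _.
have j0 : 0 < j.+1 by [].
have jn : j.+1 <= n by have := ltn_ord j; lia.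
have hm := leq_trunc_div n j.+1.
have hm2 := ltn_ceil n j0.
have hpos : 0 < n %/ j.+1 * j.+1 by rewrite muln_gt0 divn_gt0 // jn.
have ik : n - n %/ j.+1 * j.+1 < k.
  have := ltn_ord j; rewrite mulnC in hm2 *; lia.
apply: leq_trans (H1 j.+1 (n %/ j.+1 * j.+1) j0 (dvdn_mull _ (dvdnn _)) hpos) _.
have -> : n %/ j.+1 * j.+1 = n - Ordinal ik by rewrite /=; lia.
exact: (leq_bigmax (Ordinal ik)).
Qed.

Lemma comb (f : nat -> nat) k n : k <= n ->
  (forall d m, 0 < d -> d %| m -> 0 < m -> f d <= f m) ->
  (forall a b, 0 < a -> 0 < b -> minn (f a) (f b) <= f (gcdn a b)) ->
  \max_(i < k) f (n - i) + \sum_(i < k) f i.+1 <=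
  \max_(i < k) f i.+1 + \sum_(i < k) f (n - i).
Proof.
move=> kn H1 H2.
set mT := \max_(i < k) f (n - i); set mB := \max_(i < k) f i.+1.
pose M := (mT + mB)%N.
have dec : forall x, x <= M -> x = \sum_(t < M) (t < x).
  by move=> x hx; rewrite sum_lt; apply/esym/minn_idPl.
have hT : forall i : 'I_k, f (n - i) <= M.
  move=> i; apply: leq_trans (leq_addr _ _); exact: (leq_bigmax i).
have hB : forall i : 'I_k, f i.+1 <= M.
  move=> i; apply: leq_trans (leq_addl _ _); exact: (leq_bigmax i).
rewrite (dec mT (leq_addr _ _)) (dec mB (leq_addl _ _)).
rewrite (eq_bigr (fun i : 'I_k => \sum_(t < M) (t < f i.+1))); last by move=> i _; rewrite -dec.
rewrite [X in _ <= _ + X](eq_bigr (fun i : 'I_k => \sum_(t < M) (t < f (n - i)))); last by move=> i _; rewrite -dec.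
rewrite [X in _ + X <= _]exchange_big [X in _ <= _ + X]exchange_big /=.
rewrite -!big_split /=; apply: leq_sum => t _.
have cnt : \sum_(i < k) (t < f i.+1) <= \sum_(i < k) (t < f (n - i)).
  apply: (@count_le (fun j => t < f j)) => //.
    by move=> d m d0 dm m0 h; apply: leq_trans h (H1 _ _ d0 dm m0).
  move=> a b a0 b0 ha hb; apply: leq_trans (H2 _ _ a0 b0); by rewrite leq_min ha hb.
case: (ltnP t mB) => hB' /=.
  by apply: leq_add; [exact: leq_b1 | ].
have -> : \sum_(i < k) (t < f i.+1) = 0.
  apply/eqP; rewrite sum_nat_eq0; apply/forallP => i; apply/implyP => _.
  by rewrite eqb0 -leqNgt; apply: leq_trans hB'; exact: (leq_bigmax i).
rewrite addn0 add0n; exact: lt_max_sum.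
Qed.
Local Open Scope ring_scope.
Section Lucas.
Variables P Q : int.
Local Notation U := (lucasU P Q).

Lemma U0 : U 0%N = 0. Proof. by []. Qed.
Lemma U1 : U 1%N = 1. Proof. by []. Qed.
Lemma USS n : U n.+2 = P * U n.+1 - Q * U n. Proof. by []. Qed.

Lemma U_add a b : U (a + b).+1 = U a.+1 * U b.+1 - Q * U a * U b.
Proof.
have H : forall b, U (a + b).+1 = U a.+1 * U b.+1 - Q * U a * U b /\
                   U (a + b.+1).+1 = U a.+1 * U b.+2 - Q * U a * U b.+1.
  elim=> [|c [IH1 IH2]].
    rewrite addn0 addn1 !USS. rewrite U1 U0; split; ring.
  split; first exact: IH2.
  rewrite addnS USS IH2 addnS IH1 !USS; ring.
by case: (H b).
Qed.

Lemma coprime_UQ (cPQ : coprimez P Q) n : coprimez (U n.+1) Q.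
Proof.
elim: n => [|n IH]; first by apply/coprimezP; exists (1, 0); rewrite /= ?U1; ring.
case: n IH => [|n] IH.
  by rewrite USS U1 U0 mulr1 mulr0 subr0.
have/coprimezP [[a b] h1] := IH. cbn [fst snd] in h1.
have/coprimezP [[x y] h2] := cPQ. cbn [fst snd] in h2.
apply/coprimezP; exists (a * x, a * y * U n.+2 + b * x * P + b * y * Q + a * x * U n.+1); cbn [fst snd].
transitivity ((a * U n.+2 + b * Q) * (x * P + y * Q)); last by rewrite h1 h2 mulr1.
rewrite (USS n.+1); ring.
Qed.

Lemma coprime_UU (cPQ : coprimez P Q) n : coprimez (U n.+1) (U n).
Proof.
elim: n => [|n IH]; first by apply/coprimezP; exists (1, 0); rewrite /= ?U1; ring.
have/coprimezP [[a b] h1] := IH. cbn [fst snd] in h1.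
have/coprimezP [[c d] h2] := coprime_UQ cPQ n. cbn [fst snd] in h2.
apply/coprimezP; exists (- (b * d), a * c * U n.+1 + a * d * Q + b * c * U n + b * d * P); cbn [fst snd].
transitivity ((a * U n.+1 + b * U n) * (c * U n.+1 + d * Q)); last by rewrite h1 h2 mulr1.
rewrite (USS n); ring.
Qed.

Lemma U_dvd_mul m q : (U m %| U (m * q))%Z.
Proof.
case: m => [|m]; first by rewrite mul0n dvdzz.
elim: q => [|q IH]; first by rewrite muln0 dvdz0.
rewrite mulnS.
have -> : (m.+1 + m.+1 * q = (m.+1 * q + m).+1)%N by lia.
rewrite U_add.
apply: rpredB; first exact: dvdz_mull.
by rewrite -mulrA; apply: dvdz_mull; apply: dvdz_mulr.
Qed.

Lemma U_euclid (cPQ : coprimez P Q) d a c :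
  (d %| U (a + c.+1))%Z -> (d %| U c.+1)%Z -> (d %| U a)%Z.
Proof.
move=> h1 h2.
have cop : coprimez d (U a.+1 * 0 + Q * U c).
  rewrite mulr0 add0r coprimezE.
  apply: (@coprime_dvdl _ `|U c.+1|%N); first by rewrite -dvdzE.
  rewrite -coprimezE coprimezMr coprime_UQ //=; exact: coprime_UU.
rewrite mulr0 add0r in cop.
rewrite -(Gauss_dvdzl _ cop).
have -> : U a * (Q * U c) = U a.+1 * U c.+1 - U (a + c.+1).
  by rewrite addnS U_add; ring.
apply: rpredB => //; exact: dvdz_mull.
Qed.

Lemma U_gcd (cPQ : coprimez P Q) d m n :
  (d %| U m)%Z -> (d %| U n)%Z -> (d %| U (gcdn m n))%Z.
Proof.
move: {2}(m + n)%N (leqnn (m + n)) => s.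
elim: s m n => [|s IH] m n hs hm hn.
  by move: hs; rewrite leqn0 addn_eq0 => /andP[/eqP m0 /eqP n0]; rewrite m0 n0 gcd0n.
wlog le_mn : m n hs hm hn / (m <= n)%N.
  move=> W; case: (leqP m n) => h; first exact: W.
  rewrite gcdnC; apply: W => //; [lia | exact: ltnW].
case: m hs hm le_mn => [|m] hs hm le_mn; first by rewrite gcd0n.
have e : n = ((n - m.+1) + m.+1)%N by lia.
have hnm : (d %| U (n - m.+1))%Z.
  by apply: (U_euclid cPQ _ _ m) => //; rewrite -e.
have -> : gcdn m.+1 n = gcdn m.+1 (n - m.+1).
  by rewrite {1}e gcdnDr.
apply: IH => //; lia.
Qed.

Lemma U_ne0 (nd : forall alpha beta : algC,
      alpha + beta = P%:~R -> alpha * beta = Q%:~R ->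
      forall m : nat, (0 < m)%N -> (alpha / beta) ^+ m != 1)
   (Q0 : Q != 0) n : (0 < n)%N -> U n != 0.
Proof.
move=> n0.
pose D : algC := sqrtC ((P ^+ 2 - 4 * Q)%:~R).
pose al := (P%:~R + D) / 2; pose be := (P%:~R - D) / 2.
have hs : al + be = P%:~R.
  by rewrite /al /be; field.
have hp : al * be = Q%:~R.
  have hD : D ^+ 2 = (P%:~R : algC) ^+ 2 - 4 * Q%:~R.
    by rewrite /D sqrtCK rmorphB rmorphXn /= rmorphM.
  transitivity (((P%:~R : algC) ^+ 2 - D ^+ 2) / 4); first by rewrite /al /be; field.
  by rewrite hD; field.
have rec : forall j, (al - be) * (U j)%:~R = al ^+ j - be ^+ j.
  have H : forall j, (al - be) * (U j)%:~R = al ^+ j - be ^+ j /\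
                     (al - be) * (U j.+1)%:~R = al ^+ j.+1 - be ^+ j.+1.
    elim=> [|j [I1 I2]].
      by rewrite U0 U1 !expr0 expr1 subrr mulr0 mulr1.
    split => //; rewrite USS; move: (U j) (U j.+1) I1 I2 => x y I1 I2.
    rewrite rmorphB !rmorphM /= -hs -hp.
    transitivity ((al + be) * ((al - be) * y%:~R) - al * be * ((al - be) * x%:~R)); first ring.
    rewrite I1 I2 !exprS; ring.
  by move=> j; case: (H j).
have be0 : be != 0.
  apply/negP => /eqP b0; move: hp; rewrite b0 mulr0 => /eqP.
  by rewrite eq_sym intr_eq0 (negPf Q0).
apply/negP => /eqP Un0.
have := nd al be hs hp n n0; rewrite expr_div_n.
have : al ^+ n = be ^+ n.
  by apply/eqP; rewrite -subr_eq0 -rec Un0 mulr0.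
move=> ->; rewrite divff ?eqxx // expf_neq0 //.
Qed.
End Lucas.

Lemma dvd_log x y : (0 < x)%N -> (0 < y)%N -> (forall p, prime p -> logn p x <= logn p y)%N -> (x %| y)%N.
Proof.
move=> x0 y0 H; apply/(dvdn_partP _ x0) => p.
rewrite mem_primes => /and3P [pp _ _].
by rewrite p_part pfactor_dvdn // H.
Qed.

Lemma biglcm_gt0 k (g : nat -> nat) : (forall i, 0 < g i)%N -> (0 < \big[lcmn/1%N]_(i < k) g i)%N.
Proof.
move=> h; elim: k => [|k IH]; first by rewrite big_ord0.
by rewrite big_ord_recr /= lcmn_gt0 IH h.
Qed.

Lemma logn_biglcm p k (g : nat -> nat) : (forall i, 0 < g i)%N ->
  logn p (\big[lcmn/1%N]_(i < k) g i) = (\max_(i < k) logn p (g i))%N.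
Proof.
move=> h; elim: k => [|k IH]; first by rewrite !big_ord0 logn1.
by rewrite !big_ord_recr /= logn_lcm ?IH // biglcm_gt0.
Qed.

Lemma logn_prod p k (g : nat -> nat) : (forall i, 0 < g i)%N ->
  logn p (\prod_(i < k) g i) = (\sum_(i < k) logn p (g i))%N.
Proof.
move=> h; elim: k => [|k IH]; first by rewrite !big_ord0 logn1.
by rewrite !big_ord_recr /= lognM ?IH // prodn_gt0.
Qed.

Lemma absz_prod k (F : nat -> int) : absz (\prod_(i < k) F i) = (\prod_(i < k) absz (F i))%N.
Proof.
elim: k => [|k IH]; first by rewrite !big_ord0.
by rewrite !big_ord_recr /= abszM IH.
Qed.

Theorem theorem8 (P Q : int) (n k : nat) :
  P != 0 -> Q != 0 -> coprimez P Q -> P ^+ 2 - 4 * Q != 0 ->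
  (forall alpha beta : algC,
      alpha + beta = P%:~R -> alpha * beta = Q%:~R ->
      forall m : nat, (0 < m)%N -> (alpha / beta) ^+ m != 1) ->
  (0 < k)%N -> (k <= n)%N ->
  (exists2 m : nat, (0 < m)%N & lucas_lcm_binom P Q n k = m%:R) /\
  (exists z : int, lucas_binom P Q n k = lucas_lcm_binom P Q n k * z%:~R).
Proof.
move=> P0 Q0 cPQ D0 nd k0 kn.
have Unz : forall i, (0 < i)%N -> lucasU P Q i != 0 by move=> i i0; exact: U_ne0.
have upos : forall i, (0 < i)%N -> (0 < (absz (lucasU P Q i)))%N.
  by move=> i i0; rewrite absz_gt0 Unz.
pose f p i := logn p (absz (lucasU P Q i)).
have H1 : forall p d m, (0 < d)%N -> (d %| m)%N -> (0 < m)%N -> (f p d <= f p m)%N.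
  move=> p d m d0 dm m0; apply: dvdn_leq_log; first exact: upos.
  have [q ->] := dvdnP dm; rewrite -dvdzE mulnC; exact: U_dvd_mul.
have H2 : forall p a b, prime p -> (0 < a)%N -> (0 < b)%N ->
    (minn (f p a) (f p b) <= f p (gcdn a b))%N.
  move=> p a b pp a0 b0.
  have g0 : (0 < gcdn a b)%N by rewrite gcdn_gt0 a0.
  rewrite /f -pfactor_dvdn //; last exact: upos.
  set e := minn _ _.
  have ha : (p ^ e %| (absz (lucasU P Q a)))%N by rewrite pfactor_dvdn ?upos // geq_minl.
  have hb : (p ^ e %| (absz (lucasU P Q b)))%N by rewrite pfactor_dvdn ?upos // geq_minr.
  have := @U_gcd P Q cPQ (p ^ e)%:Z a b.
  by rewrite !dvdzE /=; apply.
have uT : forall i, (0 < absz (lucasU P Q (n - i)))%N \/ (k <= i)%N.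
  move=> i; case: (ltnP i k) => ik; [left; apply: upos; lia | by right].
have uB : forall i : nat, (0 < absz (lucasU P Q i.+1))%N by move=> i; apply: upos.
pose gT i := if (i < k)%N then absz (lucasU P Q (n - i)) else 1%N.
have gTpos : forall i, (0 < gT i)%N.
  move=> i; rewrite /gT; case: ifP => // ik; apply: upos; lia.
have eT : forall (op : Monoid.law 1%N), \big[op/1%N]_(i < k) absz (lucasU P Q (n - i)) = \big[op/1%N]_(i < k) gT i.
  by move=> op; apply: eq_bigr => i _; rewrite /gT ltn_ord.
set T := lcmU_top P Q n k; set B := lcmU_bot P Q k.
have T0 : (0 < T)%N by rewrite /T /lcmU_top eT; exact: (biglcm_gt0 k gT gTpos).
have B0 : (0 < B)%N by rewrite /B /lcmU_bot; exact: (biglcm_gt0 k (fun i => absz (lucasU P Q i.+1)) uB).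
have BT : (B %| T)%N.
  apply: dvd_log => // p pp.
  rewrite /T /B /lcmU_top /lcmU_bot eT (logn_biglcm p k gT gTpos).
  rewrite (logn_biglcm p k (fun i => absz (lucasU P Q i.+1)) uB).
  have := max_le (f p) k n kn (H1 p); rewrite /f.
  have e1 : (\max_(i < k) logn p (gT i) = \max_(i < k) logn p (absz (lucasU P Q (n - i))))%N.
    by apply: eq_bigr => i _; rewrite /gT ltn_ord.
  by rewrite e1.
set PT := \prod_(i < k) lucasU P Q (n - i).
set PB := \prod_(i < k) lucasU P Q i.+1.
have aPT : absz PT = (\prod_(i < k) gT i)%N.
  by rewrite /PT (absz_prod k (fun i => lucasU P Q (n - i))) eT.
have aPB : absz PB = (\prod_(i < k) absz (lucasU P Q i.+1))%N.
  by rewrite /PB (absz_prod k (fun i => lucasU P Q i.+1)).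
have key : (T * absz PB %| B * absz PT)%N.
  have PT0 : (0 < absz PT)%N by rewrite aPT; exact: prodn_gt0.
  have PB0 : (0 < absz PB)%N by rewrite aPB; exact: prodn_gt0.
  apply: dvd_log; rewrite ?muln_gt0 ?T0 ?B0 ?PT0 ?PB0 // => p pp.
  rewrite !lognM // aPT aPB.
  rewrite /T /B /lcmU_top /lcmU_bot eT (logn_biglcm p k gT gTpos).
  rewrite (logn_biglcm p k (fun i => absz (lucasU P Q i.+1)) uB).
  rewrite (logn_prod p k gT gTpos) (logn_prod p k (fun i => absz (lucasU P Q i.+1)) uB).
  have := comb (f p) k n kn (H1 p) (fun a b => H2 p a b pp); rewrite /f.
  have e1 : (\max_(i < k) logn p (gT i) = \max_(i < k) logn p (absz (lucasU P Q (n - i))))%N.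
    by apply: eq_bigr => i _; rewrite /gT ltn_ord.
  have e2 : (\sum_(i < k) logn p (gT i) = \sum_(i < k) logn p (absz (lucasU P Q (n - i))))%N.
    by apply: eq_bigr => i _; rewrite /gT ltn_ord.
  by rewrite e1 e2.
split.
  exists (T %/ B)%N; first by rewrite divn_gt0 // dvdn_leq.
  rewrite /lucas_lcm_binom -/T -/B -{1}(divnK BT) natrM mulfK //.
  by rewrite pnatr_eq0 -lt0n B0.
have dz : (T%:Z * PB %| B%:Z * PT)%Z by rewrite dvdzE !abszM.
exists ((B%:Z * PT) %/ (T%:Z * PB))%Z.
set z := ((B%:Z * PT) %/ (T%:Z * PB))%Z.
have E := divzK dz.
have PB0 : PB != 0 by rewrite -absz_gt0 aPB prodn_gt0.
have eT' : \prod_(i < k) ((lucasU P Q (n - i))%:~R : rat) = PT%:~R by rewrite rmorph_prod.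
have eB' : \prod_(i < k) ((lucasU P Q i.+1)%:~R : rat) = PB%:~R by rewrite rmorph_prod.
rewrite /lucas_binom /lucas_lcm_binom -/T -/B eT' eB'.
have nT : ((T%:Z)%:~R : rat) = T%:R by [].
have nB : ((B%:Z)%:~R : rat) = B%:R by [].
have ET : (z%:~R : rat) * (T%:R * PB%:~R) = B%:R * PT%:~R.
  by have := congr1 (fun x : int => (x%:~R : rat)) E; rewrite /= !rmorphM /= nT nB.
have T0' : (T%:R : rat) != 0 by rewrite pnatr_eq0 -lt0n T0.
have B0' : (B%:R : rat) != 0 by rewrite pnatr_eq0 -lt0n B0.
have PB0' : (PB%:~R : rat) != 0 by rewrite intr_eq0.
have zE : (z%:~R : rat) = B%:R * PT%:~R / (T%:R * PB%:~R).
  by rewrite -ET mulfK // mulf_neq0.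
rewrite zE; field.
by rewrite T0' B0' PB0'.
Qed.
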